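(* Let $(\mathcal S,\mathcal A,P,r)$ be a weakly communicating MDP and let $(g^\star,h^\star)$ be a solution of the modified Bellman equations. Let $f:\mathbb R^n\to\mathbb R$ be continuous with $f(x+c\mathbf 1)=f(x)+c$ for all $x,c$. Let $h^0\in\mathbb R^n$, $\lambda_k=\frac{2}{k+2}$, and for $k\ge1$ \[h^k=\lambda_{k-1}h^0+(1-\lambda_{k-1})\big(Th^{k-1}-f(h^{k-1})\mathbf 1\big)\] (Anchored Relative Value Iteration), and let $\pi_k$ be a greedy policy, $T^{\pi_k}h^k=Th^k$. Then for $k\ge1$, \[\|g^\star-g^{\pi_k}\|_\infty\le\|Th^k-h^k-g^\star\|_\infty\le\frac{8}{k+1}\|h^0-h^\star\|_\infty.\] Furthermore, if the MDP is unichain, then $h^k\to h^\infty$ and $f(h^k)\mathbf 1\to g^\star$ for some solution $(g^\star,h^\infty)$ of the modified Bellman equations.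
   Context: An MDP $(\mathcal S,\mathcal A,P,r)$ has finite state space $\mathcal S$ ($|\mathcal S|=n$, functions identified with $\mathbb R^n$), finite action space, transition probabilities $P(s'\mid s,a)$ and bounded reward $r$. For a policy $\pi$: $r^\pi(s)=\sum_a\pi(a\mid s)r(s,a)$, $\mathcal P^\pi(s,s')=\sum_a\pi(a\mid s)P(s'\mid s,a)$, $g^\pi(s)=\liminf_{T\to\infty}\frac1T\mathbb E_\pi[\sum_{t=0}^{T-1}r(s_t,a_t)\mid s_0=s]$, $g^\star=\max_\pi g^\pi$. $T^\pi V=r^\pi+\mathcal P^\pi V$, $(TV)(s)=\max_a\{r(s,a)+\sum_{s'}P(s'\mid s,a)V(s')\}$, $\mathbf 1$ the all-ones vector. A pair $(g,h)$ solves the modified Bellman equations if $\max_a\sum_{s'}P(s'\mid s,a)g(s')=g(s)$ and $\max_a\{r(s,a)+\sum_{s'}P(s'\mid s,a)h(s')\}=h(s)+g(s)$ for all $s$, with some policy attaining both maxima simultaneously; the first component of any solution equals $g^\star$. Weakly communicating: there is a closed set of states each accessible from every other in it under some deterministic policy, plus a possibly empty set transient under every policy. Unichain: every deterministic policy induces a chain with a single irreducible recurrent class plus possibly transient states. *)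

(* Defs.v *)
From mathcomp Require Import all_boot all_order all_algebra.
From mathcomp Require Import all_classical all_reals all_analysis.
Set Implicit Arguments. Unset Strict Implicit. Unset Printing Implicit Defensive.
Import Order.TTheory GRing.Theory Num.Theory.
Local Open Scope ring_scope.

Section MDP.
Variables (R : realType) (S A : finType).

Definition is_kernel (P : S -> A -> S -> R) : Prop :=
  (forall s a s', 0 <= P s a s') /\ (forall s a, \sum_(s' : S) P s a s' = 1).

Definition is_policy (pi : S -> A -> R) : Prop :=
  (forall s a, 0 <= pi s a) /\ (forall s, \sum_(a : A) pi s a = 1).

Definition amax (F : A -> R) : R :=
  match [pick a : A] with
  | Some a0 => \big[Num.max/F a0]_(a : A) F a
  | None => 0
  end.

Definition supnorm (x : S -> R) : R := \big[Num.max/0]_(s : S) `|x s|.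

Variables (P : S -> A -> S -> R) (r : S -> A -> R).

Definition qval (V : S -> R) (s : S) (a : A) : R :=
  r s a + \sum_(s' : S) P s a s' * V s'.

Definition Tb (V : S -> R) : S -> R := fun s => amax (qval V s).

Definition rpi (pi : S -> A -> R) (s : S) : R := \sum_(a : A) pi s a * r s a.
Definition Ppi (pi : S -> A -> R) (s s' : S) : R := \sum_(a : A) pi s a * P s a s'.
Definition Tpi (pi : S -> A -> R) (V : S -> R) : S -> R :=
  fun s => rpi pi s + \sum_(s' : S) Ppi pi s s' * V s'.

Definition detpol (d : S -> A) : S -> A -> R :=
  fun s a => if a == d s then 1 else 0.

Fixpoint mpow (M : S -> S -> R) (t : nat) : S -> S -> R :=
  match t with
  | 0 => fun s s' => if s == s' then 1 else 0
  | t'.+1 => fun s s' => \sum_(u : S) M s u * mpow M t' u s'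
  end.

(* E_pi [ sum_{t<T} r(s_t,a_t) | s_0 = s ] *)
Definition exp_return (pi : S -> A -> R) (T : nat) (s : S) : R :=
  \sum_(t < T) \sum_(s' : S) mpow (Ppi pi) t s s' * rpi pi s'.

Definition gain (pi : S -> A -> R) (s : S) : R :=
  limn_inf (fun T : nat => (T%:R)^-1 * exp_return pi T s).

Definition accessible (M : S -> S -> R) (s s' : S) : Prop :=
  exists t, 0 < mpow M t s s'.

(* s is transient in the chain M: finite expected number of visits *)
Definition transient (M : S -> S -> R) (s : S) : Prop :=
  exists B : R, forall N, \sum_(t < N) mpow M t s s <= B.

Definition recurrent (M : S -> S -> R) (s : S) : Prop := ~ transient M s.

Definition weakly_communicating : Prop :=
  exists C : {set S},
    (forall s a s', s \in C -> 0 < P s a s' -> s' \in C) /\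
    (forall s s', s \in C -> s' \in C ->
        exists d : S -> A, accessible (Ppi (detpol d)) s s') /\
    (forall s, s \notin C ->
        forall pi, is_policy pi -> transient (Ppi pi) s).

Definition unichain : Prop :=
  forall d : S -> A,
    (exists s, recurrent (Ppi (detpol d)) s) /\
    (forall s s', recurrent (Ppi (detpol d)) s -> recurrent (Ppi (detpol d)) s' ->
        accessible (Ppi (detpol d)) s s').

Definition modified_bellman (g h : S -> R) : Prop :=
  (forall s, amax (fun a => \sum_(s' : S) P s a s' * g s') = g s) /\
  (forall s, amax (qval h s) = h s + g s) /\
  (exists d : S -> A, forall s,
      \sum_(s' : S) P s (d s) s' * g s' = g s /\
      qval h s (d s) = h s + g s).

Definition lam (k : nat) : R := 2 / (k%:R + 2).

Fixpoint arvi (f : (S -> R) -> R) (h0 : S -> R) (k : nat) : S -> R :=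
  match k with
  | 0 => h0
  | k'.+1 => fun s => lam k' * h0 s
                + (1 - lam k') * (Tb (arvi f h0 k') s - f (arvi f h0 k'))
  end.

End MDP.

Definition cont_fun (R : realType) (S : finType) (f : (S -> R) -> R) : Prop :=
  forall x e, 0 < e -> exists2 d, 0 < d &
    forall y, supnorm (fun s => y s - x s) < d -> `|f y - f x| < e.

(* Main.v *)
Require Import Defs.
From mathcomp Require Import all_boot all_order all_algebra.
From mathcomp Require Import all_classical all_reals all_analysis.
From mathcomp Require Import ring lra.

Module B1.
Set Implicit Arguments. Unset Strict Implicit. Unset Printing Implicit Defensive.
Import Order.TTheory GRing.Theory Num.Theory.
Local Open Scope ring_scope.

Section Basics.
Variables (R : realType) (S A : finType).

Lemma supnorm_ge0 (x : S -> R) : 0 <= supnorm x.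
Proof.
rewrite /supnorm; elim/big_ind: _ => //= a b ha hb.
by rewrite le_max ha.
Qed.

Lemma supnorm_ub (x : S -> R) s : `|x s| <= supnorm x.
Proof. exact: (le_bigmax 0 (fun s => `|x s|) s). Qed.

Lemma supnorm_le (x : S -> R) B : 0 <= B -> (forall s, `|x s| <= B) -> supnorm x <= B.
Proof. by move=> B0 H; apply: bigmax_le. Qed.

Lemma amax_ub (F : A -> R) a : F a <= amax F.
Proof.
rewrite /amax; case: pickP => [a0 _|/(_ a)//].
exact: (le_bigmax (F a0) F a).
Qed.

Lemma amax_ex (F : A -> R) (a : A) : exists a', amax F = F a'.
Proof.
rewrite /amax; case: pickP => [a0 _|/(_ a)//].
elim/big_ind: _ => [|x y [a1 ->] [a2 ->]|i _]; first by exists a0.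
- by case: (leP (F a1) (F a2)) => _; [exists a2|exists a1].
- by exists i.
Qed.

Lemma amax_le (F : A -> R) (a : A) B : (forall a, F a <= B) -> amax F <= B.
Proof. by move=> H; case: (amax_ex F a) => a' ->. Qed.

Lemma amax_const (c : R) (a : A) : amax (fun _ : A => c) = c.
Proof. by case: (amax_ex (fun _ => c) a). Qed.

Lemma amax_shift (F : A -> R) c (a : A) : amax (fun b => F b + c) = amax F + c.
Proof.
apply/le_anti/andP; split.
  apply: (@amax_le _ a (amax F + c)) => b; by rewrite lerD2r amax_ub.
case: (amax_ex F a) => a' ->; exact: (amax_ub (fun b => F b + c)).
Qed.

Lemma amax_lip (F G : A -> R) B (a : A) : (forall b, `|F b - G b| <= B) ->
  `|amax F - amax G| <= B.
Proof.
move=> H; rewrite ler_norml; apply/andP; split.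
  case: (amax_ex G a) => a' ->.
  have := H a'; rewrite ler_norml => /andP[h1 _].
  have := amax_ub F a'; lra.
case: (amax_ex F a) => a' ->.
have := H a'; rewrite ler_norml => /andP[_ h1].
have := amax_ub G a'; lra.
Qed.

Variables (P : S -> A -> S -> R) (r : S -> A -> R).
Hypothesis hP : is_kernel P.

Lemma sumP1 s a : \sum_s' P s a s' = 1.
Proof. by case: hP => _ ->. Qed.
Lemma P_ge0 s a s' : 0 <= P s a s'.
Proof. by case: hP. Qed.

Lemma sumP_shift s a (V : S -> R) c :
  \sum_s' P s a s' * (V s' + c) = \sum_s' P s a s' * V s' + c.
Proof.
rewrite (eq_bigr (fun s' => P s a s' * V s' + P s a s' * c)); last by move=> *; rewrite mulrDr.
by rewrite big_split /= -mulr_suml sumP1 mul1r.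
Qed.

Lemma sumP_const s a c : \sum_s' P s a s' * c = c.
Proof. by rewrite -mulr_suml sumP1 mul1r. Qed.

Lemma sumP_lip s a (V W : S -> R) B : (forall s', `|V s' - W s'| <= B) ->
  `|\sum_s' P s a s' * V s' - \sum_s' P s a s' * W s'| <= B.
Proof.
move=> H; rewrite -sumrB.
rewrite (le_trans (ler_norm_sum _ _ _)) //.
rewrite -[X in _ <= X](sumP_const s a B) ler_sum // => s' _.
by rewrite -mulrBr normrM ger0_norm ?P_ge0 // ler_wpM2l ?P_ge0.
Qed.

Lemma qval_shift (V : S -> R) c s a :
  qval P r (fun s' => V s' + c) s a = qval P r V s a + c.
Proof. by rewrite /qval sumP_shift addrA. Qed.

Lemma Tb_shift (V : S -> R) c s (a : A) :
  Tb P r (fun s' => V s' + c) s = Tb P r V s + c.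
Proof.
rewrite /Tb -(amax_shift _ _ a); congr amax; apply: funext => b; exact: qval_shift.
Qed.

Lemma Tb_lip (V W : S -> R) s (a : A) :
  `|Tb P r V s - Tb P r W s| <= supnorm (fun s' => V s' - W s').
Proof.
rewrite /Tb; apply: (@amax_lip _ _ _ a) => b; rewrite /qval opprD addrACA subrr add0r.
by apply: sumP_lip => s'; apply: supnorm_ub.
Qed.

End Basics.

End B1.
Import B1.

Module B2.
Set Implicit Arguments. Unset Strict Implicit. Unset Printing Implicit Defensive.
Import Order.TTheory GRing.Theory Num.Theory.
Local Open Scope ring_scope.

Lemma sum_pos_ex (R : realType) (I : finType) (F : I -> R) :
  0 < \sum_i F i -> exists i, 0 < F i.
Proof.
move=> h; apply: contrapT => H.
have : \sum_i F i <= 0.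
  by apply: sumr_le0 => i _; rewrite leNgt; apply/negP => hi; apply: H; exists i.
by rewrite leNgt h.
Qed.

Section Markov.
Variables (R : realType) (S : finType).
Variable (M : S -> S -> R).
Hypothesis M0 : forall s s', 0 <= M s s'.
Hypothesis M1 : forall s, \sum_s' M s s' = 1.

Lemma mpow_ge0 t s s' : 0 <= mpow M t s s'.
Proof.
elim: t s s' => [|t IH] s s' /=; first by case: eqP.
by apply: sumr_ge0 => u _; rewrite mulr_ge0.
Qed.

Lemma mpow_sum1 t s : \sum_s' mpow M t s s' = 1.
Proof.
elim: t s => [|t IH] s /=.
  by rewrite (bigD1 s) //= eqxx big1 ?addr0 // => s' /negPf; rewrite eq_sym => ->.
rewrite exchange_big /=.
rewrite (eq_bigr (fun u => M s u)) ?M1 // => u _.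
by rewrite -mulr_sumr IH mulr1.
Qed.

Lemma mpowSr t s s' : mpow M t.+1 s s' = \sum_u mpow M t s u * M u s'.
Proof.
elim: t s s' => [|t IH] s s'.
  rewrite /= (bigD1 s') //= eqxx mulr1 big1 ?addr0; last first.
    by move=> u /negPf; rewrite eq_sym => ->; rewrite mulr0.
  rewrite (bigD1 s) //= eqxx mul1r big1 ?addr0 //.
  by move=> u /negPf; rewrite eq_sym => ->; rewrite mul0r.
rewrite -[LHS]/(\sum_u M s u * mpow M t.+1 u s') (eq_bigr (fun u => M s u * \sum_v mpow M t u v * M v s')); last first.
  by move=> u _; rewrite IH.
rewrite (eq_bigr (fun u => \sum_v M s u * (mpow M t u v * M v s'))); last first.
  by move=> u _; rewrite mulr_sumr.
rewrite exchange_big /=; apply: eq_bigr => v _.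
by rewrite /= mulr_suml; apply: eq_bigr => u _; rewrite mulrA.
Qed.

Definition G (N : nat) s s' := \sum_(t < N) mpow M t s s'.

Lemma G_ge0 N s s' : 0 <= G N s s'.
Proof. by apply: sumr_ge0 => t _; apply: mpow_ge0. Qed.

Lemma G_S N s s' : G N.+1 s s' = mpow M 0 s s' + \sum_u M s u * G N u s'.
Proof.
rewrite /G big_ord_recl; congr (_ + _).
rewrite (eq_bigr (fun t : 'I_N => \sum_u M s u * mpow M t u s')) //.
rewrite exchange_big; apply: eq_bigr => u _; by rewrite mulr_sumr.
Qed.

Lemma G_mono N s s' : G N s s' <= G N.+1 s s'.
Proof. by rewrite /G big_ord_recr /= lerDl mpow_ge0. Qed.

Lemma G_first N s s' : G N s s' <= G N s' s'.
Proof.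
elim: N s => [|N IH] s; first by rewrite /G !big_ord0.
case: (eqVneq s s') => [->//|ne].
rewrite G_S /= (negPf ne) add0r.
apply: (le_trans _ (G_mono N s' s')).
rewrite -[X in _ <= X]mul1r -(M1 s) mulr_suml ler_sum // => u _.
by rewrite ler_wpM2l.
Qed.

Lemma G_sum N s : \sum_s' G N s s' = N%:R.
Proof.
rewrite /G exchange_big /= (eq_bigr (fun _ => 1)) => [|t _]; last exact: mpow_sum1.
by rewrite sumr_const card_ord.
Qed.

Variable L : {set S}.
Hypothesis Lclosed : forall s u, s \in L -> 0 < M s u -> u \in L.

Lemma mpow_closed t s s' : s \in L -> 0 < mpow M t s s' -> s' \in L.
Proof.
elim: t s => [|t IH] s sL /=; first by case: eqP => [<-//|]; rewrite ltxx.
move=> /sum_pos_ex[u hu].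
have Mu : 0 < M s u.
  rewrite lt_def M0 andbT; apply/eqP=> h; move: hu; by rewrite h mul0r ltxx.
apply: (IH u (Lclosed sL Mu)).
by move: hu; rewrite pmulr_rgt0.
Qed.
Lemma mpow_out t s s' : s \in L -> s' \notin L -> mpow M t s s' = 0.
Proof.
move=> sL s'L; apply/eqP; rewrite eq_le mpow_ge0 andbT leNgt; apply/negP => h.
by move: s'L; rewrite (mpow_closed sL h).
Qed.

Lemma closed_recurrent s0 : s0 \in L -> exists2 s, s \in L & recurrent M s.
Proof.
move=> s0L; apply: contrapT => H.
have T s : s \in L -> transient M s.
  move=> sL; apply: contrapT => hr; apply: H; by exists s.
have [B HB] : exists B : S -> R, forall s, s \in L -> forall N, G N s s <= B s.
  apply: (@fin_all_exists S (fun _ => R) (fun s b => s \in L -> forall N, G N s s <= b)).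
  move=> s; case: (boolP (s \in L)) => sL; last by exists 0.
  by case: (T s sL) => b hb; exists b.
set K := \sum_s' `|B s'|.
have HN N : N%:R <= K.
  rewrite -(G_sum N s0) ler_sum // => s' _.
  case: (boolP (s' \in L)) => s'L.
    by rewrite (le_trans (G_first _ _ _)) // (le_trans (HB _ s'L N)) // ler_norm.
  by rewrite /G big1 // => t _; rewrite mpow_out.
by have := HN (Num.trunc K).+1; rewrite leNgt truncnS_gt.
Qed.

End Markov.

End B2.
Import B2.

Module B3.
Set Implicit Arguments. Unset Strict Implicit. Unset Printing Implicit Defensive.
Import Order.TTheory GRing.Theory Num.Theory.
Local Open Scope ring_scope.

Lemma argmin_ex (R : realType) (I : finType) (C : pred I) (F : I -> R) i0 :
  C i0 -> exists2 i, C i & forall j, C j -> F i <= F j.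
Proof.
move=> Ci0.
have [i [Ci E]] : exists i, C i /\ \big[Num.min/F i0]_(j | C j) F j = F i.
  elim/big_ind: _ => [|x y [a1 [C1 ->]] [a2 [C2 ->]]|i Ci]; first by exists i0.
  - by case: (leP (F a1) (F a2)) => _; [exists a1|exists a2].
  - by exists i.
exists i => // j Cj.
by have := bigmin_le_cond (F i0) F Cj; rewrite E.
Qed.

Lemma nat_mul_bound (R : realType) (x K : R) : 0 <= x -> (forall N : nat, N%:R * x <= K) -> x = 0.
Proof.
move=> x0 H; apply/eqP; rewrite eq_le x0 andbT leNgt; apply/negP => xp.
have := H (Num.trunc (K / x)).+1.
have := truncnS_gt (K / x).
set n := (Num.trunc (K / x)).+1%:R => h1 h2.
have : K < n * x by rewrite -ltr_pdivrMr.
lra.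
Qed.

Section Pol.
Variables (R : realType) (S A : finType) (P : S -> A -> S -> R) (r : S -> A -> R).
Hypothesis hP : is_kernel P.

Lemma Ppi_det (d : S -> A) s s' : Ppi P (detpol R d) s s' = P s (d s) s'.
Proof.
rewrite /Ppi (bigD1 (d s)) //= /detpol eqxx mul1r big1 ?addr0 // => a /negPf ->.
by rewrite mul0r.
Qed.

Lemma rpi_det (d : S -> A) s : rpi r (detpol R d) s = r s (d s).
Proof.
rewrite /rpi (bigD1 (d s)) //= /detpol eqxx mul1r big1 ?addr0 // => a /negPf ->.
by rewrite mul0r.
Qed.

Lemma detpol_policy (d : S -> A) : is_policy (detpol R d).
Proof.
split=> [s a|s]; first by rewrite /detpol; case: eqP.
rewrite (bigD1 (d s)) //= /detpol eqxx big1 ?addr0 // => a /negPf ->//.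
Qed.

Lemma Ppi_ge0 pi : is_policy pi -> forall s s', 0 <= Ppi P pi s s'.
Proof.
case=> p0 _ s s'; apply: sumr_ge0 => a _; rewrite mulr_ge0 //; exact: P_ge0.
Qed.

Lemma Ppi_sum1 pi : is_policy pi -> forall s, \sum_s' Ppi P pi s s' = 1.
Proof.
case=> _ p1 s; rewrite /Ppi exchange_big /= -(p1 s); apply: eq_bigr => a _.
by rewrite -mulr_sumr sumP1 // mulr1.
Qed.

Lemma harmonic_mpow (M : S -> S -> R) (g : S -> R) :
  (forall s, \sum_s' M s s' * g s' = g s) ->
  forall t s, \sum_s' mpow M t s s' * g s' = g s.
Proof.
move=> H; elim=> [|t IH] s /=.
  rewrite (bigD1 s) //= eqxx mul1r big1 ?addr0 // => s' /negPf.
  by rewrite eq_sym => ->; rewrite mul0r.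
rewrite -[RHS]H.
rewrite (eq_bigr (fun s' => \sum_u M s u * mpow M t u s' * g s')); last first.
  by move=> s' _; rewrite mulr_suml.
rewrite exchange_big /=; apply: eq_bigr => u _.
by rewrite -IH mulr_sumr; apply: eq_bigr => s' _; rewrite mulrA.
Qed.

Lemma gstar_const (g h : S -> R) :
  weakly_communicating P -> modified_bellman P r g h -> exists c, forall s, g s = c.
Proof.
move=> [C [Ccl [Cacc Ctr]]] [mb1 [mb2 [d Hd]]].
set Md := Ppi P (detpol R d).
have Md0 := Ppi_ge0 (detpol_policy d).
have Md1 := Ppi_sum1 (detpol_policy d).
case: (pickP (mem C)) => [c0 c0C|C0]; last first.
  exists 0 => s; exfalso.
  have [s1 _ rs1] := closed_recurrent Md0 Md1 (L := [set: S]) (fun _ _ _ _ => finset.in_setT _) (finset.in_setT s).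
  apply: rs1; apply: Ctr; last exact: detpol_policy.
  by apply/negP => sC; have := C0 s1; rewrite /= sC.
have [m mC mmin] := argmin_ex g c0C.
have mC' : m \in C := mC.
exists (g m).
set Lm := [set s in C | g s == g m].
have Lmcl a : forall s u, s \in Lm -> 0 < P s a u -> u \in Lm.
  move=> s u; rewrite !inE => /andP[sC /eqP gs] Pu.
  have uC := Ccl _ _ _ sC Pu.
  rewrite uC /=; apply/eqP.
  have hle : \sum_s' P s a s' * (g s' - g m) <= 0.
    have := amax_ub (fun a => \sum_s' P s a s' * g s') a; rewrite mb1 gs => hub.
    rewrite (eq_bigr (fun s' => P s a s' * g s' - P s a s' * g m)); last by move=> *; rewrite mulrBr.
    by rewrite sumrB sumP_const //; lra.
  have hge : forall s', 0 <= P s a s' * (g s' - g m).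
    move=> s'; case: (boolP (s' \in C)) => s'C.
      by rewrite mulr_ge0 ?P_ge0 // subr_ge0 mmin.
    have : P s a s' = 0.
      apply/eqP; rewrite eq_le P_ge0 // andbT leNgt; apply/negP => h'.
      by move: s'C; rewrite (Ccl _ _ _ sC h').
    by move=> ->; rewrite mul0r.
  have h0 : \sum_s' P s a s' * (g s' - g m) = 0 by apply/eqP; rewrite eq_le hle sumr_ge0.
  have := psumr_eq0P (fun i _ => hge i) h0 (i := u) isT.
  move/eqP; rewrite mulf_eq0 subr_eq0 => /orP[/eqP|/eqP//].
  by move=> h1; move: Pu; rewrite h1 ltxx.
have onC s : s \in C -> g s = g m.
  move=> sC; have [d' [t ht]] := Cacc m s mC' sC.
  have Lcl : forall s1 u, s1 \in Lm -> 0 < Ppi P (detpol R d') s1 u -> u \in Lm.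
    by move=> s1 u; rewrite Ppi_det; apply: Lmcl.
  have := @mpow_closed R S (Ppi P (detpol R d')) (Ppi_ge0 (detpol_policy d')) Lm Lcl t m s.
  by rewrite !inE mC' eqxx => /(_ isT ht) /andP[_ /eqP].
move=> s; case: (boolP (s \in C)) => sC; first exact: onC.
have [B HB] : exists B : S -> R, forall s, s \notin C -> forall N, G Md N s s <= B s.
  apply: (@fin_all_exists S (fun _ => R) (fun s b => s \notin C -> forall N, G Md N s s <= b)).
  move=> s1; case: (boolP (s1 \in C)) => s1C; first by exists 0.
  by case: (Ctr s1 s1C _ (detpol_policy d)) => b hb; exists b.
have harm : forall s, \sum_s' Md s s' * g s' = g s.
  by move=> s1; rewrite /Md; under eq_bigr do rewrite Ppi_det; case: (Hd s1).
apply/eqP; rewrite -subr_eq0 -normr_eq0; apply/eqP.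
apply: (@nat_mul_bound _ _ (\sum_s' `|B s'| * `|g s' - g m|)) => // N.
have E1 : N%:R * g s = \sum_s' G Md N s s' * g s'.
  rewrite /G; under eq_bigr do rewrite mulr_suml.
  rewrite exchange_big /=.
  under eq_bigr do rewrite (harmonic_mpow harm).
  by rewrite sumr_const card_ord mulr_natl.
have E : N%:R * (g s - g m) = \sum_s' G Md N s s' * (g s' - g m).
  rewrite mulrBr E1 -(G_sum Md1 N s) mulr_suml -sumrB.
  by apply: eq_bigr => s' _; rewrite mulrBr.
rewrite -(ger0_norm (ler0n _ N)) -normrM E.
rewrite (le_trans (ler_norm_sum _ _ _)) // ler_sum // => s' _.
rewrite normrM; case: (boolP (s' \in C)) => s'C.
  by rewrite onC // subrr normr0 !mulr0.
rewrite ler_wpM2r // ger0_norm ?G_ge0 //.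
by rewrite (le_trans (G_first Md0 Md1 _ _ _)) // (le_trans (HB _ s'C N)) // ler_norm.
Qed.
End Pol.

End B3.
Import B3.

Module B4.
Set Implicit Arguments. Unset Strict Implicit. Unset Printing Implicit Defensive.
Import Order.TTheory GRing.Theory Num.Theory.
Local Open Scope ring_scope.

Lemma eqW_le (R : realType) (x y : R) : x = y -> x <= y.
Proof. by move->. Qed.

Section Halpern.
Variables (R : realType) (S : finType).
Variable U : (S -> R) -> (S -> R).
Variables (h0 hs : S -> R).
Hypothesis Une : forall x y, supnorm (fun s => U x s - U y s) <= supnorm (fun s => x s - y s).
Hypothesis Ufix : forall s, U hs s = hs s.

Fixpoint hal k : S -> R := match k with
  | 0 => h0
  | k'.+1 => fun s => lam R k' * h0 s + (1 - lam R k') * U (hal k') s end.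

Let D := supnorm (fun s => h0 s - hs s).

Lemma D_ge0 : 0 <= D. Proof. exact: supnorm_ge0. Qed.

Lemma natS (k : nat) : (k.+1)%:R = k%:R + 1 :> R.
Proof. by rewrite -addn1 natrD. Qed.

Lemma lamE k : lam R k = 2 / (k%:R + 2).
Proof. by []. Qed.

Lemma lam_ge0 k : 0 <= lam R k.
Proof. by rewrite lamE divr_ge0 // addr_ge0. Qed.

Lemma lam_le1 k : lam R k <= 1.
Proof. by rewrite lamE ler_pdivrMr ?mul1r ?lerDr // ltr_wpDl. Qed.

Lemma Upt x y s : `|U x s - U y s| <= supnorm (fun s => x s - y s).
Proof. exact: le_trans (supnorm_ub (fun s => U x s - U y s) s) (Une x y). Qed.

Lemma hal_bound k s : `|hal k s - hs s| <= D.
Proof.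
elim: k s => [|k IH] s /=; first exact: (supnorm_ub (fun s => h0 s - hs s) s).
have l0 := lam_ge0 k; have l1 := lam_le1 k.
have E : lam R k * h0 s + (1 - lam R k) * U (hal k) s - hs s =
  lam R k * (h0 s - hs s) + (1 - lam R k) * (U (hal k) s - U hs s).
  by rewrite Ufix; ring.
rewrite E; apply: (le_trans (ler_normD _ _)).
rewrite (normrM (lam R k)) (normrM (1 - lam R k)) (ger0_norm l0) (ger0_norm (x := 1 - lam R k)) ?subr_ge0 //.
have h1 : `|h0 s - hs s| <= D by exact: (supnorm_ub (fun s => h0 s - hs s) s).
have h2 : `|U (hal k) s - U hs s| <= D.
  apply: (le_trans (Upt _ _ _)); apply: supnorm_le; [exact: D_ge0|exact: IH].
apply: (le_trans (lerD (ler_wpM2l l0 h1) (ler_wpM2l _ h2))); first by rewrite subr_ge0.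
by apply: eqW_le; ring.
Qed.

Lemma Uh0_bound k s : `|U (hal k) s - h0 s| <= 2 * D.
Proof.
have h1 : `|h0 s - hs s| <= D by exact: (supnorm_ub (fun s => h0 s - hs s) s).
have h2 : `|U (hal k) s - U hs s| <= D.
  apply: (le_trans (Upt _ _ _)); apply: supnorm_le; [exact: D_ge0|exact: hal_bound].
rewrite Ufix in h2.
have -> : U (hal k) s - h0 s = (U (hal k) s - hs s) - (h0 s - hs s) by ring.
by rewrite (le_trans (ler_normB _ _)) // mulr2n mulrDl mul1r lerD.
Qed.

Definition ak k := supnorm (fun s => hal k.+1 s - hal k s).

Lemma ak_bound k : ak k <= 4 * k%:R * D / ((k%:R + 1) * (k%:R + 2)).
Proof.
elim: k => [|k IH].
  rewrite mulr0n mulr0 mul0r mul0r /ak; apply: supnorm_le => // s /=.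
  by rewrite /lam /= add0r divff // mul1r subrr mul0r addr0 subrr normr0.
apply: supnorm_le.
  by rewrite divr_ge0 ?mulr_ge0 ?D_ge0 ?addr_ge0.
move=> s.
pose x : R := k%:R.
have x0 : 0 <= x by rewrite ler0n.
have E : hal k.+2 s - hal k.+1 s =
   (1 - lam R k.+1) * (U (hal k.+1) s - U (hal k) s) + (lam R k - lam R k.+1) * (U (hal k) s - h0 s).
  rewrite /=; ring.
have l1 : 1 - lam R k.+1 = (x + 1) / (x + 3).
  rewrite lamE (natS k) -/x; field; lra.
have l2 : lam R k - lam R k.+1 = 2 / ((x + 2) * (x + 3)).
  rewrite !lamE (natS k) -/x; field; lra.
rewrite E; apply: le_trans (ler_normD _ _) _.
rewrite (normrM (1 - _)) (normrM (lam R k - _)) l1 l2.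
have p1 : 0 <= (x + 1) / (x + 3) by rewrite divr_ge0 // addr_ge0.
have p2 : 0 <= 2 / ((x + 2) * (x + 3)) by rewrite divr_ge0 // mulr_ge0 // addr_ge0.
rewrite (ger0_norm p1) (ger0_norm p2).
have h1 : `|U (hal k.+1) s - U (hal k) s| <= 4 * x * D / ((x + 1) * (x + 2)).
  exact: le_trans (Upt _ _ _) IH.
have h2 := Uh0_bound k s.
rewrite (natS k) -/x.
apply: (le_trans (lerD (ler_wpM2l p1 h1) (ler_wpM2l p2 h2))).
apply: eqW_le; field; lra.
Qed.
Lemma ak_bound2 k : ak k <= 4 * D / (k%:R + 2).
Proof.
apply: (le_trans (ak_bound k)).
pose x : R := k%:R; have x0 : 0 <= x by rewrite ler0n.
have D0 := D_ge0.
rewrite -/x (_ : 4 * x * D / ((x + 1) * (x + 2)) = (x / (x + 1)) * (4 * D / (x + 2))); last first.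
  field; lra.
rewrite ler_piMl ?divr_ge0 ?mulr_ge0 ?addr_ge0 //.
by rewrite ler_pdivrMr ?mul1r ?lerDl // ltr_wpDl.
Qed.

Lemma rate_pt j s : `|U (hal j.+1) s - hal j.+1 s| <= 8 / (j.+1%:R + 1) * D.
Proof.
pose x : R := j%:R; have x0 : 0 <= x by rewrite ler0n.
have E : U (hal j.+1) s - hal j.+1 s =
  lam R j * (U (hal j.+1) s - h0 s) + (1 - lam R j) * (U (hal j.+1) s - U (hal j) s).
  have -> : hal j.+1 s = lam R j * h0 s + (1 - lam R j) * U (hal j) s by [].
  ring.
rewrite E; apply: le_trans (ler_normD _ _) _.
have l0 := lam_ge0 j; have l1 := lam_le1 j.
rewrite (normrM (lam R j)) (normrM (1 - _)) (ger0_norm l0) (ger0_norm (x := 1 - lam R j)) ?subr_ge0 //.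
have h1 := Uh0_bound j.+1 s.
have h2 : `|U (hal j.+1) s - U (hal j) s| <= 4 * D / (x + 2).
  exact: le_trans (Upt _ _ _) (ak_bound2 j).
have D0 := D_ge0.
have h3 : (1 - lam R j) * `|U (hal j.+1) s - U (hal j) s| <= 4 * D / (x + 2).
  apply: le_trans (ler_wpM2l _ h2) _; first by rewrite subr_ge0.
  rewrite ler_piMl // ?divr_ge0 ?mulr_ge0 ?addr_ge0 //; have := lam_ge0 j; lra.
apply: le_trans (lerD (ler_wpM2l l0 h1) h3) _.
rewrite lamE (natS j) -/x; apply: eqW_le; field; lra.
Qed.

Lemma rate k : (1 <= k)%N ->
  supnorm (fun s => U (hal k) s - hal k s) <= 8 / (k%:R + 1) * D.
Proof.
case: k => // j _; apply: supnorm_le; last exact: rate_pt.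
by rewrite mulr_ge0 ?D_ge0 // divr_ge0 // addr_ge0.
Qed.

End Halpern.

End B4.
Import B4.

Module B5.
Set Implicit Arguments. Unset Strict Implicit. Unset Printing Implicit Defensive.
Import Order.TTheory GRing.Theory Num.Theory.
Local Open Scope ring_scope.
Local Open Scope classical_set_scope.

Lemma liminf_close (R : realType) (u : nat -> R) (g e K : R) :
  0 <= e -> 0 <= K ->
  (forall T, (1 <= T)%N -> `|u T - g| <= e + K / T%:R) ->
  `|limn_inf (u : (R^o)^nat) - g| <= e.
Proof.
move=> e0 K0 H.
set B := `|u 0%N| + `|g| + e + K.
have uB T : `|u T| <= B.
  case: T => [|T]; first by rewrite /B -!addrA lerDl !addr_ge0.
  have := H T.+1 isT.
  have : K / T.+1%:R <= K by rewrite ler_pdivrMr ?ltr0Sn // ler_peMr // ler1n.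
  move: (K / T.+1%:R) => w h1 h2.
  have h3 : `|u T.+1| <= `|u T.+1 - g| + `|g|.
    by rewrite -[X in `|X|](subrK g) ler_normD.
  rewrite /B; have := normr_ge0 (u 0%N); lra.
have hub : has_ubound (range u).
  exists B => _ [T _ <-]; exact: le_trans (ler_norm _) (uB T).
have hlb : has_lbound (range u).
  exists (- B) => _ [T' _ <-]; rewrite lerNl.
  by apply: le_trans (uB T'); rewrite -normrN ler_norm.
have Hinf : limn_inf (u : (R^o)^nat) = sup (range (infs u)).
  exact: cvg_lim (cvg_infs_sup hub hlb).
have hlbd n : has_lbound (sdrop u n) by exact: has_lbound_sdrop.
have hne n : sdrop u n !=set0 by exists (u n); exists n => /=.
rewrite Hinf ler_norml; apply/andP; split; last first.
  apply/ler_addgt0Pr => eta eta0.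
  have [N HN] : exists N : nat, K / N.+1%:R <= eta.
    exists (Num.trunc (K / eta)); rewrite ler_pdivrMr ?ltr0Sn //.
    rewrite -ler_pdivrMl // mulrC; exact/ltW/truncnS_gt.
  rewrite lerBlDl; apply: ge_sup; first by exists (infs u 0%N); exists 0%N.
  move=> _ [n _ <-]; rewrite /infs /=.
  apply: (le_trans (ge_inf (hlbd n) (x := u (maxn n N.+1)) _)).
    by exists (maxn n N.+1) => //=; rewrite leq_maxl.
  have := H (maxn n N.+1) (leq_trans (ltn0Sn N) (leq_maxr _ _)).
  have : K / (maxn n N.+1)%:R <= K / N.+1%:R.
    rewrite ler_pdivrMr ?ltr0n ?(leq_trans (ltn0Sn N) (leq_maxr _ _)) //.
    rewrite mulrAC ler_pdivlMr ?ltr0Sn // ler_wpM2l // ler_nat leq_maxr //.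
  move: HN; move: (K / (maxn n N.+1)%:R) (K / N.+1%:R) => w1 w2.
  rewrite ler_norml; lra.
suff : g - e <= sup (range (infs u)) by move=> h; lra.
apply/ler_addgt0Pr => eta eta0.
have [N HN] : exists N : nat, K / N.+1%:R <= eta.
  exists (Num.trunc (K / eta)); rewrite ler_pdivrMr ?ltr0Sn //.
  rewrite -ler_pdivrMl // mulrC; exact/ltW/truncnS_gt.
rewrite -lerBlDr.
have hsup : has_ubound (range (infs u)).
  exists B => _ [n _ <-]; rewrite /infs /=.
  have memb : sdrop u n (u n) by exists n => /=.
  apply: (le_trans (ge_inf (hlbd n) memb)).
  exact: le_trans (ler_norm _) (uB n).
have hin : range (infs u) (infs u N.+1) by exists N.+1.
apply: le_trans (ub_le_sup hsup hin).
rewrite /infs /=; apply: lb_le_inf => // _ [k /= hk <-].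
have := H k (leq_trans (ltn0Sn N) hk).
have : K / k%:R <= K / N.+1%:R.
  rewrite ler_pdivrMr ?ltr0n ?(leq_trans (ltn0Sn N) hk) //.
  rewrite mulrAC ler_pdivlMr ?ltr0Sn // ler_wpM2l // ler_nat //.
move: HN; move: (K / k%:R) (K / N.+1%:R) => w1 w2.
rewrite ler_norml; lra.
Qed.

Lemma eqW_le' (R : realType) (x y : R) : x = y -> x <= y.
Proof. by move->. Qed.

Section Gain.
Variables (R : realType) (S A : finType) (P : S -> A -> S -> R) (r : S -> A -> R).
Hypothesis hP : is_kernel P.
Variable pi : S -> A -> R.
Hypothesis hpi : is_policy pi.
Variable h : S -> R.
Hypothesis Hgreedy : forall s, Tpi P r pi h s = Tb P r h s.

Let M := Ppi P pi.
Let M0 : forall s s', 0 <= M s s'.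
Proof. case: hpi => p0 _ s s'; apply: sumr_ge0 => a _; rewrite mulr_ge0 //; exact: P_ge0. Qed.
Let M1 : forall s, \sum_s' M s s' = 1.
Proof.
case: hpi => _ p1 s; rewrite /M /Ppi exchange_big /= -(p1 s); apply: eq_bigr => a _.
by rewrite -mulr_sumr sumP1 // mulr1.
Qed.

Let H t s := \sum_s' mpow M t s s' * h s'.
Let V t s := \sum_s' mpow M t s s' * (Tb P r h s' - h s').

Lemma exp_return_id T s :
  exp_return P r pi T s = \sum_(t < T) V t s + h s - H T s.
Proof.
elim: T => [|T IH].
  rewrite /exp_return big_ord0 /H /= big_ord0 add0r.
  rewrite (bigD1 s) //= eqxx mul1r big1 ?addr0 ?subrr // => s' /negPf.
  by rewrite eq_sym => ->; rewrite mul0r.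
rewrite /exp_return big_ord_recr /= -/(exp_return P r pi T s) IH big_ord_recr /=.
have E : \sum_s' mpow M T s s' * rpi r pi s' = V T s + H T s - H T.+1 s.
  rewrite /V /H.
  have Hr s' : rpi r pi s' = (Tb P r h s' - h s') + h s' - \sum_u M s' u * h u.
    by rewrite -Hgreedy /Tpi; rewrite -/M; ring.
  under eq_bigr do rewrite Hr.
  have -> : \sum_s' mpow M T.+1 s s' * h s' =
      \sum_s' mpow M T s s' * (\sum_u M s' u * h u).
    under eq_bigr do rewrite mpowSr mulr_suml.
    rewrite exchange_big /=; apply: eq_bigr => u _; rewrite mulr_sumr.
    by apply: eq_bigr => v _; rewrite mulrA.
  rewrite -big_split /= -sumrB; apply: eq_bigr => s' _; ring.
rewrite E; ring.
Qed.
Lemma gain_close (g e : R) : (forall s, `|Tb P r h s - h s - g| <= e) ->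
  forall s, `|gain P r pi s - g| <= e.
Proof.
move=> He s.
have e0 : 0 <= e := le_trans (normr_ge0 _) (He s).
set Hn := supnorm h.
have Hn0 : 0 <= Hn := supnorm_ge0 h.
apply: (liminf_close e0 (K := 2 * Hn)); first by rewrite mulr_ge0.
move=> T T1.
have Vb t : `|V t s - g| <= e.
  have -> : V t s - g = \sum_s' mpow M t s s' * (Tb P r h s' - h s' - g).
    rewrite /V; under [RHS]eq_bigr do rewrite mulrBr.
    by rewrite sumrB -mulr_suml (mpow_sum1 M1) mul1r.
  apply: le_trans (ler_norm_sum _ _ _) _.
  rewrite -[X in _ <= X]mul1r -(mpow_sum1 M1 t s) mulr_suml ler_sum // => s' _.
  by rewrite normrM ger0_norm ?mpow_ge0 // ler_wpM2l ?mpow_ge0.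
have Sb : `|\sum_(t < T) V t s - T%:R * g| <= T%:R * e.
  have -> : \sum_(t < T) V t s - T%:R * g = \sum_(t < T) (V t s - g).
    by rewrite sumrB sumr_const card_ord mulr_natl.
  apply: le_trans (ler_norm_sum _ _ _) _.
  have -> : T%:R * e = \sum_(t < T) e by rewrite sumr_const card_ord mulr_natl.
  by apply: ler_sum => t _; exact: Vb.
have Hb : `|h s - H T s| <= 2 * Hn.
  apply: le_trans (ler_normB _ _) _; rewrite mulr2n mulrDl mul1r lerD //.
    exact: supnorm_ub.
  apply: le_trans (ler_norm_sum _ _ _) _.
  rewrite -[X in _ <= X]mul1r -(mpow_sum1 M1 T s) mulr_suml ler_sum // => s' _.
  by rewrite normrM ger0_norm ?mpow_ge0 // ler_wpM2l ?mpow_ge0 ?supnorm_ub.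
have T0 : 0 < T%:R :> R by rewrite ltr0n.
have -> : T%:R^-1 * exp_return P r pi T s - g =
    T%:R^-1 * ((\sum_(t < T) V t s - T%:R * g) + (h s - H T s)).
  by rewrite exp_return_id; field; rewrite gt_eqF.
have Ti : 0 <= T%:R^-1 :> R by rewrite invr_ge0 ltW.
rewrite normrM (ger0_norm Ti).
apply: le_trans (ler_wpM2l Ti (ler_normD _ _)) _.
apply: le_trans (ler_wpM2l Ti (lerD Sb Hb)) _.
apply: eqW_le'; field; rewrite gt_eqF //.
Qed.
End Gain.

End B5.
Import B5.

Module B6.
Set Implicit Arguments. Unset Strict Implicit. Unset Printing Implicit Defensive.
Import Order.TTheory GRing.Theory Num.Theory.
Local Open Scope ring_scope.

Section Span.
Variables (R : realType) (S A : finType) (P : S -> A -> S -> R).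
Hypothesis hP : is_kernel P.
Hypothesis hU : unichain P.
Variable p : R.
Hypothesis p0 : 0 < p.
Hypothesis p1 : p <= 1.
Hypothesis pmin : forall s a s', 0 < P s a s' -> p <= P s a s'.

Fixpoint cc (j : nat) : R := match j with 0 => 0 | j'.+1 => (cc j' + 1) / p end.

Lemma cc_ge0 j : 0 <= cc j.
Proof. elim: j => //= j IH; by rewrite divr_ge0 ?addr_ge0 // ltW. Qed.

Lemma cc_le j : cc j <= cc j.+1.
Proof.
rewrite /= ler_pdivlMr //; have := cc_ge0 j; move: (cc j) => x x0.
by rewrite (le_trans (ler_piMr x0 p1)) // lerDl.
Qed.

Lemma cc_mono i j : (i <= j)%N -> cc i <= cc j.
Proof.
move=> /subnK <-; elim: (j - i)%N => [|k IH]; first by rewrite add0n.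
by rewrite addSn (le_trans IH) // cc_le.
Qed.

Lemma step_up (q : S -> R) (w : S -> R) (Mx a eta : R) s s' :
  (forall u, 0 <= q u) -> \sum_u q u = 1 -> (forall u, w u <= Mx) ->
  w s <= \sum_u q u * w u + eta -> Mx - a <= w s -> p <= q s' ->
  0 <= a + eta ->
  Mx - (a + eta) / p <= w s'.
Proof.
move=> q0 q1 wM hs ha hp ae.
have qs' : 0 < q s' := lt_le_trans p0 hp.
have E : \sum_u q u * w u <= q s' * w s' + (1 - q s') * Mx.
  have -> : 1 - q s' = \sum_(u | u != s') q u by rewrite -q1 (bigD1 s') //= addrC addrK.
  rewrite (bigD1 s') //= lerD2l mulr_suml.
  by apply: ler_sum => u _; rewrite ler_wpM2l.
have h1 : q s' * (Mx - w s') <= a + eta.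
  have : q s' * (Mx - w s') = q s' * Mx - q s' * w s' by ring.
  move=> ->; nra.
have h2 : Mx - w s' <= (a + eta) / q s'.
  by rewrite ler_pdivlMr // mulrC.
have h3 : (a + eta) / q s' <= (a + eta) / p.
  by rewrite ler_wpM2l // lef_pV2 ?posrE.
move: h2 h3; move: ((a + eta) / q s') ((a + eta) / p) => x y; lra.
Qed.
Lemma step_down (q : S -> R) (w : S -> R) (mn a eta : R) s s' :
  (forall u, 0 <= q u) -> \sum_u q u = 1 -> (forall u, mn <= w u) ->
  \sum_u q u * w u - eta <= w s -> w s <= mn + a -> p <= q s' ->
  0 <= a + eta ->
  w s' <= mn + (a + eta) / p.
Proof.
move=> q0 q1 wm hs ha hp ae.
have E : \sum_u q u * - w u = - \sum_u q u * w u.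
  by rewrite -sumrN; apply: eq_bigr => u _; rewrite mulrN.
have wM : forall u, - w u <= - mn by move=> u; rewrite lerN2.
have hs' : - w s <= \sum_u q u * - w u + eta by rewrite E; lra.
have ha' : - mn - a <= - w s by lra.
have := step_up q0 q1 wM hs' ha' hp ae.
move: ((a + eta) / p) => z; lra.
Qed.

Lemma pigeon (L : nat -> {set S}) :
  (forall j, L j \subset L j.+1) -> (0 < #|L 0%N|)%N ->
  exists j, (j < #|S|)%N /\ L j.+1 \subset L j.
Proof.
move=> Lmono L0; apply: contrapT => H.
have Hp j : (j < #|S|)%N -> (#|L j| < #|L j.+1|)%N.
  move=> hj; apply: proper_card; rewrite properE Lmono /=.
  by apply/negP => hs; apply: H; exists j.
have Hc j : (j <= #|S|)%N -> (j < #|L j|)%N.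
  elim: j => [_|j IH hj]; first by [].
  exact: leq_ltn_trans (IH (ltnW hj)) (Hp j hj).
have := Hc _ (leqnn #|S|).
by rewrite ltnNge max_card.
Qed.

Lemma span_bound (d1 d2 : S -> A) (w : S -> R) eta : 0 <= eta ->
  (forall s, w s <= \sum_s' P s (d1 s) s' * w s' + eta) ->
  (forall s, \sum_s' P s (d2 s) s' * w s' - eta <= w s) ->
  forall s1 s2, w s1 - w s2 <= 2 * cc #|S| * eta.
Proof.
move=> e0 H1 H2 s1 s2.
have [smax _ hmax] := @argmin_ex R S predT (fun s => - w s) s1 isT.
have [smin _ hmin] := @argmin_ex R S predT w s1 isT.
set Mx := w smax; set mn := w smin.
have wM u : w u <= Mx by have := hmax u isT; rewrite lerN2.
have wm u : mn <= w u by exact: hmin.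
set n := #|S|.
have cn0 := cc_ge0 n.
have Kdef : 2 * cc n * eta = 2 * (cc n * eta) by rewrite mulrA.
rewrite Kdef.
suff : Mx - mn <= 2 * (cc n * eta) by have := wM s1; have := wm s2; lra.
rewrite leNgt; apply/negP => hbig.
set th := (Mx + mn) / 2.
have ce j : (j <= n)%N -> 0 <= cc j * eta <= cc n * eta.
  by move=> hj; rewrite mulr_ge0 ?cc_ge0 //= ler_wpM2r // cc_mono.
pose d s := if th <= w s then d1 s else d2 s.
pose Lup j := [set s | Mx - cc j * eta <= w s].
pose Ldn j := [set s | w s <= mn + cc j * eta].
have upth j s : (j <= n)%N -> s \in Lup j -> th <= w s.
  move=> /ce /andP[c1 c2]; rewrite inE => hs.
  move: c1 c2 hs hbig; rewrite /th; move: (cc j * eta) (cc n * eta) => x y; lra.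
have dnth j s : (j <= n)%N -> s \in Ldn j -> w s < th.
  move=> /ce /andP[c1 c2]; rewrite inE => hs.
  move: c1 c2 hs hbig; rewrite /th; move: (cc j * eta) (cc n * eta) => x y; lra.
have ccS j : (cc j * eta + eta) / p = cc j.+1 * eta.
  by rewrite /=; field; rewrite gt_eqF.
have Lupmono j : Lup j \subset Lup j.+1.
  apply/fintype.subsetP => s; rewrite !inE => hs; apply: le_trans hs.
  by rewrite lerB // ler_wpM2r // cc_le.
have Ldnmono j : Ldn j \subset Ldn j.+1.
  apply/fintype.subsetP => s; rewrite !inE => hs; apply: le_trans hs _.
  by rewrite lerD // ler_wpM2r // cc_le.
have smaxL j : smax \in Lup j.
  by rewrite inE gerBl mulr_ge0 ?cc_ge0.
have sminL j : smin \in Ldn j.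
  by rewrite inE lerDl mulr_ge0 ?cc_ge0.
have [j [jn Lj]] := @pigeon Lup Lupmono (ltac:(by apply/card_gt0P; exists smax)).
have [j' [jn' Lj']] := @pigeon Ldn Ldnmono (ltac:(by apply/card_gt0P; exists smin)).
set M := Ppi P (detpol R d).
have M0 := Ppi_ge0 hP (@detpol_policy R S A d).
have M1 := Ppi_sum1 hP (@detpol_policy R S A d).
have Pq0 s a u : 0 <= P s a u by apply: P_ge0.
have Pq1 s a : \sum_u P s a u = 1 by apply: sumP1.
have clup : forall s u, s \in Lup j -> 0 < M s u -> u \in Lup j.
  move=> s u sL; rewrite /M Ppi_det /d.
  have := upth j s (ltnW jn) sL; move=> hth; rewrite hth => hPu.
  apply: (fintype.subsetP Lj); rewrite inE -ccS.
  apply: (@step_up (P s (d1 s)) w Mx (cc j * eta) eta s u) => //.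
  - by move: sL; rewrite inE.
  - exact: pmin hPu.
  - by rewrite addr_ge0 // mulr_ge0 ?cc_ge0.
have cldn : forall s u, s \in Ldn j' -> 0 < M s u -> u \in Ldn j'.
  move=> s u sL; rewrite /M Ppi_det /d.
  have := dnth j' s (ltnW jn') sL; move=> hth; rewrite leNgt hth /= => hPu.
  apply: (fintype.subsetP Lj'); rewrite inE -ccS.
  apply: (@step_down (P s (d2 s)) w mn (cc j' * eta) eta s u) => //.
  - by move: sL; rewrite inE.
  - exact: pmin hPu.
  - by rewrite addr_ge0 // mulr_ge0 ?cc_ge0.
have [s3 s3L rec3] := closed_recurrent M0 M1 clup (smaxL j).
have [s4 s4L rec4] := closed_recurrent M0 M1 cldn (sminL j').
have [_ acc] := hU d.
have [t ht] := acc s4 s3 rec4 rec3.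
have s3L' := mpow_closed M0 cldn s4L ht.
have := upth j s3 (ltnW jn) s3L; have := dnth j' s3 (ltnW jn') s3L'.
lra.
Qed.

End Span.

Lemma pmin_ex (R : realType) (S A : finType) (P : S -> A -> S -> R) :
  exists p : R, [/\ 0 < p, p <= 1 & forall s a s', 0 < P s a s' -> p <= P s a s'].
Proof.
pose C := fun x : S * A * S => 0 < P x.1.1 x.1.2 x.2.
case: (pickP C) => [x0 Cx0|C0]; last first.
  exists 1; split => // s a s' h; exfalso.
  by have := C0 (s, a, s'); rewrite /C /= h.
have [m Cm mmin] := @argmin_ex R _ C (fun x => P x.1.1 x.1.2 x.2) x0 Cx0.
exists (Num.min (P m.1.1 m.1.2 m.2) 1); split.
- by rewrite lt_min ltr01 andbT; exact: Cm.
- by rewrite ge_min lexx orbT.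
- move=> s a s' h; rewrite ge_min; apply/orP; left.
  exact: (mmin (s, a, s')).
Qed.

End B6.
Import B6.

Module B7.
Set Implicit Arguments. Unset Strict Implicit. Unset Printing Implicit Defensive.
Import Order.TTheory GRing.Theory Num.Theory.
Local Open Scope ring_scope.

Section Main.
Variables (R : realType) (S A : finType) (P : S -> A -> S -> R) (r : S -> A -> R).
Variables (gstar hstar : S -> R) (f : (S -> R) -> R) (h0 : S -> R).
Hypothesis hP : is_kernel P.
Hypothesis hf : forall (x : S -> R) (c : R), f (fun s => x s + c) = f x + c.
Variable g : R.
Hypothesis Hg : forall s, gstar s = g.
Variable dst : S -> A.
Hypothesis Hd : forall s, qval P r hstar s (dst s) = hstar s + gstar s.
Hypothesis HT : forall s, Tb P r hstar s = hstar s + gstar s.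

Definition U (y : S -> R) s := Tb P r y s - g.

Lemma Une x y : supnorm (fun s => U x s - U y s) <= supnorm (fun s => x s - y s).
Proof.
apply: supnorm_le; first exact: supnorm_ge0.
move=> s; rewrite /U (_ : forall a b : R, a - g - (b - g) = a - b); last by move=> *; ring.
exact: Tb_lip r hP _ _ s (dst s).
Qed.

Lemma Ufix s : U hstar s = hstar s.
Proof. by rewrite /U HT Hg; ring. Qed.

Definition yy k := hal U h0 k.
Definition cs k := match k with 0 => 0 | k'.+1 => (1 - lam R k') * (g - f (yy k')) end.

Lemma arvi_eq k s : arvi P r f h0 k s = yy k s + cs k.
Proof.
elim: k s => [|k IH] s; first by rewrite /= addr0.
have E : arvi P r f h0 k = (fun s => yy k s + cs k) by apply: funext => s'; exact: IH.
rewrite [LHS]/= E (Tb_shift r hP _ _ _ (dst s)) hf /yy /= /U; ring.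
Qed.

Lemma key_eq k s : Tb P r (arvi P r f h0 k) s - arvi P r f h0 k s - gstar s
  = U (yy k) s - yy k s.
Proof.
have E : arvi P r f h0 k = (fun s => yy k s + cs k) by apply: funext => s'; exact: arvi_eq.
by rewrite E (Tb_shift r hP _ _ _ (dst s)) Hg /U; ring.
Qed.

Lemma part1 (pi : nat -> S -> A -> R) :
  (forall k, is_policy (pi k)) ->
  (forall k, Tpi P r (pi k) (arvi P r f h0 k) = Tb P r (arvi P r f h0 k)) ->
  forall k, (1 <= k)%N ->
     supnorm (fun s => gstar s - gain P r (pi k) s)
       <= supnorm (fun s => Tb P r (arvi P r f h0 k) s - arvi P r f h0 k s - gstar s)
     /\ supnorm (fun s => Tb P r (arvi P r f h0 k) s - arvi P r f h0 k s - gstar s)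
       <= 8 / (k%:R + 1) * supnorm (fun s => h0 s - hstar s).
Proof.
move=> hpol hgr k hk; split.
  apply: supnorm_le; first exact: supnorm_ge0.
  move=> s; rewrite Hg distrC.
  apply: (gain_close hP (hpol k) (h := arvi P r f h0 k)).
    by move=> s'; rewrite hgr.
  move=> s'; rewrite -(Hg s').
  exact: (supnorm_ub (fun s => Tb P r (arvi P r f h0 k) s - arvi P r f h0 k s - gstar s)).
have -> : (fun s => Tb P r (arvi P r f h0 k) s - arvi P r f h0 k s - gstar s)
   = (fun s => U (yy k) s - yy k s) by apply: funext => s; exact: key_eq.
exact: (rate h0 Une Ufix hk).
Qed.

Lemma greedy_ex (y : S -> R) : exists d1 : S -> A, forall s, qval P r y s (d1 s) = Tb P r y s.
Proof.
apply: (@fin_all_exists S (fun _ => A) (fun s a => qval P r y s a = Tb P r y s)) => s.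
by have [a' Ha] := amax_ex (qval P r y s) (dst s); exists a'; rewrite /Tb Ha.
Qed.

Lemma sumPB s a (x z : S -> R) :
  \sum_s' P s a s' * (x s' - z s') = \sum_s' P s a s' * x s' - \sum_s' P s a s' * z s'.
Proof. by rewrite -sumrB; apply: eq_bigr => s' _; rewrite mulrBr. Qed.

Definition eta k := supnorm (fun s => U (yy k) s - yy k s).

Hypothesis hU : unichain P.
Variable p : R.
Hypotheses (p0 : 0 < p) (p1 : p <= 1).
Hypothesis pmin : forall s a s', 0 < P s a s' -> p <= P s a s'.

Lemma span_y k s1 s2 :
  (yy k s1 - hstar s1) - (yy k s2 - hstar s2) <= 2 * cc p #|S| * eta k.
Proof.
have [d1 Hd1] := greedy_ex (yy k).
apply: (span_bound hP hU p0 p1 pmin (d1 := d1) (d2 := dst) (w := fun s => yy k s - hstar s)).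
- exact: supnorm_ge0.
- move=> s; rewrite sumPB.
  have u1 := supnorm_ub (fun s => U (yy k) s - yy k s) s.
  have u2 := amax_ub (qval P r hstar s) (d1 s).
  move: u2; rewrite -/(Tb P r hstar s) HT Hg => u2.
  move: u1; rewrite /U -Hd1 /qval -/(eta k) => u1.
  move: u2; rewrite /qval => u2.
  rewrite ler_norml in u1; case/andP: u1 => u1 _.
  lra.
- move=> s; rewrite sumPB.
  have u1 := supnorm_ub (fun s => U (yy k) s - yy k s) s.
  have u2 := amax_ub (qval P r (yy k) s) (dst s).
  move: u1; rewrite /U -/(eta k) -/(Tb P r (yy k) s) => u1.
  have u3 := Hd s; rewrite Hg /qval in u3.
  move: u2; rewrite /qval -/(Tb P r (yy k) s) => u2.
  rewrite ler_norml in u1; case/andP: u1 => _ u1.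
  lra.
Qed.

Hypothesis hcont : cont_fun f.

Definition ev (Q : nat -> Prop) := exists N, forall k, (N <= k)%N -> Q k.

Lemma ev_and (Q1 Q2 : nat -> Prop) : ev Q1 -> ev Q2 -> ev (fun k => Q1 k /\ Q2 k).
Proof.
move=> [N1 H1] [N2 H2]; exists (maxn N1 N2) => k hk; split.
  by apply: H1; rewrite (leq_trans (leq_maxl _ _) hk).
by apply: H2; rewrite (leq_trans (leq_maxr _ _) hk).
Qed.

Lemma ev_shift (Q : nat -> Prop) : ev Q -> ev (fun k => Q k.+1).
Proof. by move=> [N H]; exists N => k hk; apply: H; rewrite (leq_trans hk). Qed.

Lemma ev_small (C : R) : 0 <= C -> forall e, 0 < e -> ev (fun k => C / (k%:R + 1) <= e).
Proof.
move=> C0 e e0; exists (Num.trunc (C / e)).+1 => k hk.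
have k1 : 0 < k%:R + 1 :> R by rewrite ltr_wpDl.
rewrite ler_pdivrMr // mulrDr mulr1 [e * _]mulrC.
have h2 : (Num.trunc (C / e)).+1%:R <= k%:R :> R by rewrite ler_nat.
have h3 : C / e < k%:R := lt_le_trans (truncnS_gt _) h2.
rewrite ltr_pdivrMr // in h3.
move: h3; move: (k%:R * e) => z; lra.
Qed.

Let D := supnorm (fun s => h0 s - hstar s).
Let Kc := 2 * cc p #|S|.

Lemma D0 : 0 <= D. Proof. exact: supnorm_ge0. Qed.
Lemma Kc0 : 0 <= Kc. Proof. by rewrite mulr_ge0 // cc_ge0. Qed.
Lemma eta0 k : 0 <= eta k. Proof. exact: supnorm_ge0. Qed.

Lemma eta_small e : 0 < e -> ev (fun k => Kc * eta k <= e).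
Proof.
move=> e0.
have [N HN] := ev_small (mulr_ge0 (mulr_ge0 Kc0 (ler0n R 8)) D0) e0.
exists (maxn N 1) => k hk.
have k1 : (1 <= k)%N by rewrite (leq_trans (leq_maxr _ _) hk).
have := HN k (leq_trans (leq_maxl _ _) hk).
have := rate h0 Une Ufix k1; rewrite -/(eta k) -/D => he.
apply: le_trans; rewrite -!mulrA ler_wpM2l ?Kc0 //.
apply: ler_wpM2l; first exact: cc_ge0.
by apply: le_trans he _; apply: eqW_le; ring.
Qed.

Variable s0 : S.
Definition tt k := yy k s0 - hstar s0.
Definition ee k s := yy k s - hstar s - tt k.
Definition Dl k := f (fun s => hstar s + ee k s) - f hstar.

Lemma ee_bound k s : `|ee k s| <= Kc * eta k.
Proof.
rewrite /ee /tt ler_norml; have := span_y k s s0; have := span_y k s0 s.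
rewrite -/Kc /Kc; lra.
Qed.

Lemma fyy k : f (yy k) = f hstar + Dl k + tt k.
Proof.
have -> : yy k = (fun s => (hstar s + ee k s) + tt k) by apply: funext => s; rewrite /ee; ring.
by rewrite hf /Dl; ring.
Qed.

Lemma Dl_small e : 0 < e -> ev (fun k => `|Dl k| <= e).
Proof.
move=> e0; have [de de0 Hde] := hcont hstar e0.
have [N HN] := eta_small (divr_gt0 de0 (ltr0n R 2)).
exists N => k hk; apply: ltW; apply: Hde.
apply: (le_lt_trans (y := de / 2)); last by rewrite ltr_pdivrMr // ltr_pMr // ltr1n.
apply: supnorm_le; first by rewrite divr_ge0 // ltW.
move=> s; rewrite (_ : hstar s + ee k s - hstar s = ee k s); last by ring.
exact: le_trans (ee_bound k s) (HN k hk).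
Qed.

Lemma tt_step k : `|tt k.+1 - tt k| <= 4 * D / (k%:R + 1).
Proof.
rewrite /tt (_ : forall a b c : R, a - c - (b - c) = a - b); last by move=> *; ring.
apply: le_trans (supnorm_ub (fun s => yy k.+1 s - yy k s) s0) _.
apply: le_trans (ak_bound2 h0 Une Ufix k) _; rewrite -/D.
rewrite ler_wpM2l ?mulr_ge0 ?D0 // lef_pV2 ?posrE ?ltr_wpDl //.
by rewrite lerD2l ler1n.
Qed.

Lemma tt_bound k : `|tt k| <= D.
Proof. rewrite /tt /yy; exact: (hal_bound h0 Une Ufix k s0). Qed.

Lemma lam_small k : lam R k <= 2 / (k%:R + 1).
Proof.
rewrite /lam ler_wpM2l // lef_pV2 ?posrE ?ltr_wpDl //.
by rewrite lerD2l ler1n.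
Qed.

Definition hinf s := hstar s - f hstar + g.

Lemma arviS_id k s : arvi P r f h0 k.+1 s - hinf s =
  ee k.+1 s + (tt k.+1 - tt k) - Dl k - lam R k * (g - f (yy k)).
Proof.
rewrite arvi_eq [cs _]/= fyy /hinf /ee; ring.
Qed.

Lemma farviS_id k : f (arvi P r f h0 k.+1) - g =
  (tt k.+1 - tt k) + Dl k.+1 - Dl k - lam R k * (g - f (yy k)).
Proof.
have -> : arvi P r f h0 k.+1 = (fun s => yy k.+1 s + cs k.+1).
  by apply: funext => s'; exact: arvi_eq.
rewrite hf fyy [cs _]/= fyy; ring.
Qed.

Lemma final_ev e : 0 < e -> ev (fun k =>
  `|arvi P r f h0 k.+1 s0 - hinf s0| <= e /\ `|f (arvi P r f h0 k.+1) - g| <= e).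
Proof.
move=> e0.
set Bc := `|g| + `|f hstar| + 1 + D.
have Bc0 : 0 <= Bc by rewrite /Bc !addr_ge0 // D0.
set e' := Num.min 1 (e / (4 + Bc)).
have e'0 : 0 < e' by rewrite lt_min ltr01 divr_gt0 // ltr_wpDr.
have e'1 : e' <= 1 by rewrite ge_min lexx.
have e'e : e' * 4 + e' * Bc <= e.
  rewrite -mulrDr.
  have : e' <= e / (4 + Bc) by rewrite ge_min lexx orbT.
  by rewrite ler_pdivlMr // ltr_wpDr.
have [N HN] := ev_and (ev_shift (eta_small e'0)) (ev_and (ev_small (mulr_ge0 (ler0n R 4) D0) e'0)
  (ev_and (Dl_small e'0) (ev_and (ev_shift (Dl_small e'0)) (ev_small (ler0n R 2) e'0)))).
exists N => k hk.
have [A1 [A2 [A3 [A4 A5]]]] := HN k hk.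
have ha : `|ee k.+1 s0| <= e' := le_trans (ee_bound _ _) A1.
have hb : `|tt k.+1 - tt k| <= e' := le_trans (tt_step k) A2.
have hl : lam R k <= e' := le_trans (lam_small k) A5.
have hl0 : 0 <= lam R k := lam_ge0 R k.
have hgf : `|g - f (yy k)| <= Bc.
  rewrite fyy (_ : g - (f hstar + Dl k + tt k) = g - f hstar - Dl k - tt k); last by ring.
  have h4 : forall a b c d : R, `|a - b - c - d| <= `|a| + `|b| + `|c| + `|d|.
    move=> a b c d; apply: le_trans (ler_normB _ _) _; rewrite lerD2r.
    apply: le_trans (ler_normB _ _) _; rewrite lerD2r.
    exact: ler_normB.
  have := h4 g (f hstar) (Dl k) (tt k); have := tt_bound k; rewrite /Bc; lra.
have hm : `|lam R k * (g - f (yy k))| <= e' * Bc.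
  by rewrite normrM ger0_norm // ler_pM.
have hc := A3; have hc' := A4.
split.
  rewrite arviS_id.
  move: ha hb hc hm e'e; rewrite !ler_norml.
  move: (e' * Bc) (lam R k * (g - f (yy k))) => z m; lra.
rewrite farviS_id.
move: hb hc hc' hm e'e; rewrite !ler_norml.
move: (e' * Bc) (lam R k * (g - f (yy k))) => z m; lra.
Qed.

Lemma cvg_eps (u : nat -> R) (l : R) :
  (forall e, 0 < e -> exists N, forall k, (N <= k)%N -> `|u k - l| <= e) ->
  (u @ \oo --> (l : R^o))%classic.
Proof.
move=> H; apply/cvgrPdist_le => e e0.
have [N HN] := H e e0.
exists N => // k /= hk; rewrite distrC; exact: HN.
Qed.

Lemma arvi_cvg : ((fun k => arvi P r f h0 k s0) @ \oo --> (hinf s0 : R^o))%classic.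
Proof.
apply: cvg_eps => e e0; have [N HN] := final_ev e0.
exists N.+1 => k; case: k => // k hk; exact: (HN k hk).1.
Qed.

Lemma farvi_cvg : ((fun k => f (arvi P r f h0 k)) @ \oo --> (g : R^o))%classic.
Proof.
apply: cvg_eps => e e0; have [N HN] := final_ev e0.
exists N.+1 => k; case: k => // k hk; exact: (HN k hk).2.
Qed.
End Main.

End B7.
Import B7.

Import Order.TTheory GRing.Theory Num.Theory.
Local Open Scope ring_scope.
Local Open Scope classical_set_scope.

Theorem theorem6 (R : realType) (S A : finType)
  (P : S -> A -> S -> R) (r : S -> A -> R)
  (gstar hstar : S -> R) (f : (S -> R) -> R) (h0 : S -> R)
  (pi : nat -> S -> A -> R) :
  is_kernel P ->
  weakly_communicating P ->
  modified_bellman P r gstar hstar ->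
  cont_fun f ->
  (forall (x : S -> R) (c : R), f (fun s => x s + c) = f x + c) ->
  (forall k, is_policy (pi k)) ->
  (forall k, Tpi P r (pi k) (arvi P r f h0 k) = Tb P r (arvi P r f h0 k)) ->
  (forall k, (1 <= k)%N ->
     supnorm (fun s => gstar s - gain P r (pi k) s)
       <= supnorm (fun s => Tb P r (arvi P r f h0 k) s - arvi P r f h0 k s - gstar s)
     /\ supnorm (fun s => Tb P r (arvi P r f h0 k) s - arvi P r f h0 k s - gstar s)
       <= 8 / (k%:R + 1) * supnorm (fun s => h0 s - hstar s))
  /\
  (unichain P ->
     exists hinf : S -> R,
       modified_bellman P r gstar hinf /\
       (forall s, (fun k => arvi P r f h0 k s) @ \oo --> (hinf s : R^o)) /\
       (forall s, (fun k => f (arvi P r f h0 k)) @ \oo --> (gstar s : R^o))).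
Proof.
move=> hP hWC hMB hcont hf hpol hgr.
have [g Hg] := gstar_const hP hWC hMB.
have [mb1 [mb2 [dst Hdst]]] := hMB.
have Hd s : qval P r hstar s (dst s) = hstar s + gstar s := (Hdst s).2.
have HT s : Tb P r hstar s = hstar s + gstar s := mb2 s.
split.
  move=> k hk; exact: (part1 hP hf Hg dst HT hpol hgr hk).
move=> hU.
have [p [p0 p1 pm]] := pmin_ex P.
exists (hinf hstar f g); split; last split.
- have Eh : hinf hstar f g = (fun s => hstar s + (g - f hstar)).
    by apply: funext => s; rewrite /hinf; ring.
  rewrite Eh; split; first exact: mb1.
  split.
    move=> s.
    rewrite (_ : qval P r (fun s => hstar s + (g - f hstar)) s = fun a => qval P r hstar s a + (g - f hstar)).
      by rewrite (amax_shift _ _ (dst s)) mb2; ring.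
    by apply: funext => a; rewrite (qval_shift r hP).
  exists dst => s; split; first exact: (Hdst s).1.
  by rewrite (qval_shift r hP) Hd; ring.
- move=> s; exact: (arvi_cvg h0 hP hf Hg Hd HT hU p0 p1 pm hcont (s0 := s)).
- move=> s; rewrite Hg; exact: (farvi_cvg h0 hP hf Hg Hd HT hU p0 p1 pm hcont s).
Qed.
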